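(* Let $G$ be a finite $p$-group whose commutator subgroup $D(G)$ equals its Frattini subgroup and is elementary abelian of rank $n\ge2$, with notation $\phi$, $g_1,\dots,g_n$, $\ell_{i,j}$ as below, and assume that $\ell_{i+1,i}$ is a nonzero linear form for every $i\in\{1,\dots,n-1\}$. Then: (1) for every $i\in\{1,\dots,n-1\}$ there exists $\lambda_i\in\mathbb F_p\setminus\{0\}$ with $\ell_{i+1,i}=\lambda_i\ell_{2,1}$; consequently there is an $\mathbb F_p$-basis of $D(G)$ in which every $\phi(y)$ is lower unitriangular with all subdiagonal entries equal to $\ell(y)$ for a single nonzero linear form $\ell:G/D(G)\to\mathbb F_p$; (2) $n\le p$.
   Context: $\phi:G/D(G)\to\mathrm{Aut}(D(G))$ is the conjugation action $\phi(y)(g)=s(y)^{-1}gs(y)$ for any lift $s(y)\in G$ of $y$; $g_1,\dots,g_n$ is an $\mathbb F_p$-basis of $D(G)$ (written additively) in which each $\phi(y)$ is lower unitriangular: $\phi(y)(g_j)=g_j+\sum_{i>j}\ell_{i,j}(y)g_i$ with $\ell_{i,j}(y)\in\mathbb F_p$. Each $\ell_{i+1,i}$ is a homomorphism $G/D(G)\to\mathbb F_p$. *)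

(* Defs.v *)
From HB Require Import structures.
From mathcomp Require Import all_boot all_order all_algebra all_fingroup all_solvable.
Set Implicit Arguments. Unset Strict Implicit. Unset Printing Implicit Defensive.
Import GRing.Theory.

(* g_0, ..., g_(n-1) (0-based indexing) is an F_p-basis of the elementary
   abelian p-group E, written multiplicatively: every x in E is uniquely
   a product  prod_i g_i ^ a_i  with coefficients a_i in F_p. *)
Definition Fp_basis (gT : finGroupType) (p n : nat) (E : {set gT})
  (g : nat -> gT) : Prop :=
  [/\ (forall i, i < n -> g i \in E),
      (forall x, x \in E ->
         exists a : nat -> 'F_p, x = (\prod_(i < n) g i ^+ a i)%g)
    & (forall a b : nat -> 'F_p,
         (\prod_(i < n) g i ^+ a i)%g = (\prod_(i < n) g i ^+ b i)%g ->
         forall i, i < n -> a i = b i)].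

(* In the basis g, conjugation by every y in G is lower unitriangular with
   entries l i j y (i > j):  g_j ^ y = g_j * prod_(j.+1 <= i < n) g_i ^ (l i j y).
   (x ^ y = y^-1 x y in MathComp, matching phi(y)(g) = s(y)^-1 g s(y).) *)
Definition lower_unitri (gT : finGroupType) (p n : nat) (G : {set gT})
  (g : nat -> gT) (l : nat -> nat -> gT -> 'F_p) : Prop :=
  forall y j, y \in G -> j < n ->
    (g j ^ y = g j * \prod_(j.+1 <= i < n) g i ^+ l i j y)%g.

Definition linear_form_mod (gT : finGroupType) (p : nat) (G : {set gT})
  (f : gT -> 'F_p) : Prop :=
  (forall x y, x \in G -> y \in G -> f (x * y)%g = (f x + f y)%R) /\
  (forall x, x \in (G^`(1))%g -> f x = 0%R).

Arguments Fp_basis {gT} p n E g.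
Arguments lower_unitri {gT} p n G g l.
Arguments linear_form_mod {gT} p G f.

(* Main.v *)
Require Import Defs.
From HB Require Import structures.
From mathcomp Require Import all_boot all_order all_algebra all_fingroup all_solvable.
Import GRing.Theory.
Local Open Scope group_scope.
Set Implicit Arguments. Unset Strict Implicit. Unset Printing Implicit Defensive.

Lemma valFpD (p : nat) (a b : 'F_p) : prime p ->
  nat_of_ord (a + b)%R = (a + b) %% p.
Proof.
move=> pp; by rewrite -{1}(natr_Zp a) -{1}(natr_Zp b) -natrD val_Fp_nat.
Qed.

Lemma valFpM (p : nat) (a b : 'F_p) : prime p ->
  nat_of_ord (a * b)%R = (a * b) %% p.
Proof.
move=> pp; by rewrite -{1}(natr_Zp a) -{1}(natr_Zp b) -natrM val_Fp_nat.
Qed.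

Lemma valFp1 (p : nat) : prime p -> nat_of_ord (1%R : 'F_p) = 1%N.
Proof.
move=> pp; rewrite -[1%R]/((1%:R : 'F_p)%R) val_Fp_nat // modn_small //.
exact: prime_gt1.
Qed.

Lemma expFpD (gT : finGroupType) (p : nat) (x : gT) (a b : 'F_p) :
  prime p -> x ^+ p = 1 -> x ^+ (a + b)%R = x ^+ a * x ^+ b.
Proof. by move=> pp xp; rewrite valFpD // expg_mod // expgnDr. Qed.

Lemma expFpM (gT : finGroupType) (p : nat) (x : gT) (a b : 'F_p) :
  prime p -> x ^+ p = 1 -> x ^+ (a * b)%R = (x ^+ a) ^+ b.
Proof. by move=> pp xp; rewrite valFpM // expg_mod // expgnA. Qed.

Lemma abC (gT : finGroupType) (D : {group gT}) x y :
  abelian D -> x \in D -> y \in D -> commute x y.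
Proof.
move/centsP=> h xD yD; have := h _ yD _ xD; by [].
Qed.

Definition Pr (gT : finGroupType) (p n : nat) (e : nat -> gT) (a : nat -> 'F_p)
  : gT := \prod_(i < n) e i ^+ a i.

Lemma Pr_in (gT : finGroupType) (p n : nat) (D : {group gT}) (e : nat -> gT) (a : nat -> 'F_p) :
  (forall i, i < n -> e i \in D) -> Pr n e a \in D.
Proof.
by move=> He; apply: group_prod => i _; rewrite groupX // He.
Qed.

Lemma PrM (gT : finGroupType) (p n : nat) (D : {group gT}) (e : nat -> gT) (a b : nat -> 'F_p) :
  prime p -> abelian D -> (forall x, x \in D -> x ^+ p = 1) ->
  (forall i, i < n -> e i \in D) ->
  Pr n e a * Pr n e b = Pr n e (fun i => a i + b i)%R.
Proof.
move=> pp abD Dp; elim: n => [|n IH] He; first by rewrite /Pr !big_ord0 mulg1.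
have He' : forall i, i < n -> e i \in D by move=> i lt; apply: He; apply: ltnW.
have := IH He'; rewrite /Pr !big_ord_recr /= => <-.
set A := \prod_(i < n) _; set B := \prod_(i < n) _.
have BD : B \in D by apply: (@Pr_in gT p n D e b He').
have enD : e n \in D by apply: He.
rewrite expFpD ?Dp // -!mulgA; congr (_ * _); rewrite !mulgA; congr (_ * _).
by apply: (abC abD); rewrite ?groupX.
Qed.

Lemma PrX (gT : finGroupType) (p n : nat) (D : {group gT}) (e : nat -> gT) (a : nat -> 'F_p) (k : 'F_p) :
  prime p -> abelian D -> (forall x, x \in D -> x ^+ p = 1) ->
  (forall i, i < n -> e i \in D) ->
  Pr n e a ^+ k = Pr n e (fun i => a i * k)%R.
Proof.
move=> pp abD Dp; elim: n => [|n IH] He; first by rewrite /Pr !big_ord0 expg1n.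
have He' : forall i, i < n -> e i \in D by move=> i lt; apply: He; apply: ltnW.
have := IH He'; rewrite /Pr !big_ord_recr /= => <-.
have enD : e n \in D by apply: He.
rewrite expgMn ?expFpM ?Dp //.
by apply: (abC abD); rewrite ?groupX //; apply: (@Pr_in gT p n D e a He').
Qed.

Lemma PrE (gT : finGroupType) (p n : nat) (e : nat -> gT) (a b : nat -> 'F_p) :
  (forall i, i < n -> a i = b i) -> Pr n e a = Pr n e b.
Proof. by move=> E; apply: eq_bigr => i _; rewrite E. Qed.

Lemma Pr0 (gT : finGroupType) (p n : nat) (e : nat -> gT) :
  Pr n e (fun _ => 0%R : 'F_p) = 1.
Proof. by apply: big1 => i _; rewrite expg0. Qed.

Lemma Prbig (gT : finGroupType) (p n : nat) (D : {group gT}) (e : nat -> gT) m (F : nat -> nat -> 'F_p) :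
  prime p -> abelian D -> (forall x, x \in D -> x ^+ p = 1) ->
  (forall i, i < n -> e i \in D) ->
  \prod_(j < m) Pr n e (F j) = Pr n e (fun i => \sum_(j < m) F j i)%R.
Proof.
move=> pp abD Dp He; elim: m => [|m IH].
  rewrite big_ord0 -(@Pr0 gT p n e); apply: PrE => i _; by rewrite big_ord0.
rewrite big_ord_recr /= IH (PrM _ _ pp abD Dp He); apply: PrE => i _.
by rewrite big_ord_recr.
Qed.

Definition vt (p : nat) (j : nat) (w : nat -> 'F_p) : nat -> 'F_p :=
  fun i => if i == j then 1%R else if j < i then w i else 0%R.

Lemma Prtri (gT : finGroupType) (p n : nat) (e : nat -> gT) (w : nat -> 'F_p) j :
  prime p -> j < n ->
  e j * \prod_(j.+1 <= i < n) e i ^+ w i = Pr n e (vt j w).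
Proof.
move=> pp jn; rewrite /Pr /vt.
rewrite -(big_mkord xpredT (fun i => e i ^+ (if i == j then 1%R else if j < i then w i else 0%R))).
rewrite (big_cat_nat (leq0n j) (ltnW jn)) /= [X in _ = _ * X]big_ltn // eqxx.
rewrite [X in _ = X * _]big1_seq; last first.
  move=> i /andP[_]; rewrite mem_index_iota => /andP[_ lt].
  by rewrite ltn_eqF // ltnNge ltnW.
rewrite mul1g valFp1 // expg1; congr (_ * _).
apply: eq_big_nat => i /andP[lt _]; by rewrite gtn_eqF // lt.
Qed.

Definition slower (R : pzRingType) m (A : 'M[R]_m) :=
  forall a b : 'I_m, (a <= b)%N -> A a b = 0%R.

Lemma sl_mul0 (R : pzRingType) m (A B : 'M[R]_m.+1) (i j : 'I_m.+1) :
  slower A -> slower B -> (i <= j.+1)%N -> (A * B)%R i j = 0%R.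
Proof.
move=> HA HB hij; rewrite -mulmxE mxE big1 // => k _.
case: (leqP i k) => [ik|ki]; first by rewrite HA // mul0r.
case: (leqP k j) => [kj|jk]; first by rewrite HB // mulr0.
by move: (leq_trans ki hij); rewrite ltnS leqNgt jk.
Qed.

Lemma sl_mul2 (R : pzRingType) m (A B : 'M[R]_m.+1) (i j k : 'I_m.+1) :
  slower A -> slower B -> i = j.+2 :> nat -> k = j.+1 :> nat ->
  (A * B)%R i j = (A i k * B k j)%R.
Proof.
move=> HA HB hi hk; rewrite -mulmxE mxE (bigD1 k) //= big1 ?addr0 // => a ak.
case: (leqP i a) => [ia|ai]; first by rewrite HA // mul0r.
case: (leqP a j) => [aj|ja]; first by rewrite HB // mulr0.
have : a = k :> nat by apply/eqP; rewrite hk eqn_leq ja andbT -ltnS -hi ai.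
by move/val_inj => E; rewrite E eqxx in ak.
Qed.

Lemma sl_pow (R : idomainType) m (A : 'M[R]_m.+1) :
  slower A -> (forall a b : 'I_m.+1, b.+1 = a :> nat -> A a b != 0%R) ->
  forall k, (forall i : 'I_m.+1, (i < k)%N -> (A ^+ k)%R i ord0 = 0%R) /\
            (forall i : 'I_m.+1, i = k :> nat -> (A ^+ k)%R i ord0 != 0%R).
Proof.
move=> HA Hd; elim=> [|k [IH1 IH2]].
  split=> // i /= i0; rewrite expr0 mxE.
  have -> : i = ord0 by apply: val_inj.
  by rewrite eqxx oner_neq0.
split=> i hi; rewrite exprS -mulmxE mxE.
  rewrite big1 // => a _.
  case: (leqP i a) => [ia|ai]; first by rewrite HA // mul0r.
  by rewrite IH1 ?mulr0 // (leq_trans ai).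
have kl : (k < m.+1)%N by rewrite -hi ltnW // ltn_ord.
rewrite (bigD1 (inord k)) //= big1 ?addr0.
  rewrite mulf_neq0 // ?IH2 ?inordK //; apply: Hd; by rewrite inordK.
move=> a ak.
case: (leqP i a) => [ia|ai]; first by rewrite HA // mul0r.
case: (ltnP a k) => [ak'|ka]; first by rewrite IH1 // mulr0.
have : a = (inord k : 'I_m.+1) :> nat by apply/eqP; rewrite inordK // eqn_leq ka andbT -ltnS -hi ai.
by move/val_inj => E; rewrite E eqxx in ak.
Qed.

Lemma pchar_mx (p m : nat) : prime p -> p \in [pchar 'M['F_p]_m.+1]%R.
Proof.
move=> pp; rewrite inE pp /=; apply/eqP/matrixP => i j.
by rewrite mulmxnE -mulr_natr pchar_Fp_0 // mulr0 mxE.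
Qed.

Lemma entry10 (R : pzRingType) m (A B C : 'M[R]_m.+1) : (1 < m.+1)%N ->
  slower A -> slower B -> C = (A + B + A * B)%R ->
  C (inord 1) (inord 0) = (A (inord 1) (inord 0) + B (inord 1) (inord 0))%R.
Proof.
move=> m1 HA HB ->.
have Z : (A * B)%R (inord 1) (inord 0) = 0%R.
  by apply: sl_mul0; rewrite // !inordK.
by rewrite mxE Z addr0 mxE.
Qed.

Theorem proposition5p4 (gT : finGroupType) (G : {group gT}) (p n : nat)
  (g : nat -> gT) (l : nat -> nat -> gT -> 'F_p) :
  prime p -> p.-group G ->
  G^`(1) = 'Phi(G) ->
  p.-abelem G^`(1) -> logn p #|G^`(1)| = n -> (2 <= n)%N ->
  Fp_basis p n G^`(1) g ->
  lower_unitri p n G g l ->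
  (forall i, (i.+1 < n)%N -> exists2 y, y \in G & l i.+1 i y != 0%R) ->
  ((forall i, (i.+1 < n)%N ->
      exists lam : 'F_p, lam != 0%R /\
        forall y, y \in G -> l i.+1 i y = (lam * l 1%N 0%N y)%R)
   /\
   (exists (h : nat -> gT) (m : nat -> nat -> gT -> 'F_p) (f : gT -> 'F_p),
      [/\ Fp_basis p n G^`(1) h,
          lower_unitri p n G h m,
          (forall i y, (i.+1 < n)%N -> y \in G -> m i.+1 i y = f y),
          linear_form_mod p G f
        & exists2 y, y \in G & f y != 0%R]))
  /\ (n <= p)%N.
Proof.
move=> pp pG DPhi abD0 _ n2 [Hg Hex Huniq] Hlow Hsub.
have /(abelemP pp) [abD Dp] := abD0.
have DG : G^`(1) \subset G := der_sub 1 G.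
have [n' En] : exists n', n = n'.+1 by exists n.-1; rewrite prednK // ltnW.
subst n.
pose v j y := vt j (fun i => l i j y).
have Hconj : forall y j, y \in G -> j < n'.+1 -> g j ^ y = Pr n'.+1 g (v j y).
  by move=> y j yG jn; rewrite Hlow // Prtri.
have Hmul : forall x y j k, x \in G -> y \in G -> j < n'.+1 -> k < n'.+1 ->
    v j (x * y) k = (\sum_(i < n'.+1) v i y k * v j x i)%R.
  move=> x y j k xG yG jn kn.
  suff H : Pr n'.+1 g (v j (x * y)) = Pr n'.+1 g (fun k => \sum_(i < n'.+1) v i y k * v j x i)%R.
    exact: (Huniq _ _ H k kn).
  rewrite -Hconj ?groupM // conjgM Hconj // {1}/Pr conjg_prod.
  rewrite -(@Prbig gT p n'.+1 _ g n'.+1 (fun i k => (v i y k * v j x i)%R) pp abD Dp Hg); apply: eq_bigr => i _.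
  by rewrite conjXg Hconj // (@PrX gT p n'.+1 _ g _ _ pp abD Dp Hg).
pose N (y : gT) : 'M['F_p]_n'.+1 := (\matrix_(k, j) (if (j < k)%N then l k j y else 0))%R.
have vM : forall y (k j : 'I_n'.+1), v j y k = (1%:M + N y)%R k j.
  move=> y k j; rewrite !mxE /v /vt.
  case: ifP => [/eqP/val_inj ->|ne]; first by rewrite eqxx ltnn addr0.
  have -> : (k == j) = false by apply/negP => /eqP E; rewrite E eqxx in ne.
  by rewrite add0r.
have MM : forall x y, x \in G -> y \in G -> (1%:M + N (x * y)%g = (1%:M + N y) * (1%:M + N x))%R.
  move=> x y xG yG; apply/matrixP => k j.
  rewrite -vM Hmul // -mulmxE mxE; apply: eq_bigr => i _; by rewrite -!vM mulrC.
have slN : forall y, slower (N y).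
  by move=> y a b le; rewrite mxE ltnNge le.
have NMN : forall x y, x \in G -> y \in G ->
    N (x * y)%g = (N y + N x + N y * N x)%R.
  move=> x y xG yG; apply: (@addrI _ (1%:M)%R); rewrite MM //.
  rewrite mulrDl !mulrDr !mul1r mulr1.
  by rewrite -!addrA; congr (_ + _)%R; rewrite addrCA.
have ND : forall d, d \in G^`(1) -> N d = 0%R.
  move=> d dD; apply/matrixP => k j; rewrite !mxE; case: ifP => // jk.
  have dG : d \in G by apply: (subsetP DG).
  have E : g j ^ d = g j.
    by rewrite conjgE (abC abD (Hg _ (ltn_ord j)) dD) mulKg.
  have H : Pr n'.+1 g (v j d) = Pr n'.+1 g (vt j (fun _ : nat => 0%R : 'F_p)).
    rewrite -Hconj // E -(@Prtri gT p n'.+1 g (fun _ : nat => 0%R : 'F_p) j pp (ltn_ord j)).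
    by rewrite big1 ?mulg1 // => i _; rewrite expg0.
  have := Huniq _ _ H k (ltn_ord k).
  by rewrite /v /vt gtn_eqF // jk.
have Ncomm : forall x y, x \in G -> y \in G -> (N x * N y = N y * N x)%R.
  move=> x y xG yG.
  have cD : [~ x, y] \in G^`(1) by rewrite derg1 mem_commg.
  have cG : [~ x, y] \in G by apply: (subsetP DG).
  have : N (x * y)%g = N (y * x)%g.
    by rewrite commgC (NMN _ _ (groupM yG xG) cG) (ND _ cD) mul0r !addr0 add0r.
  rewrite !NMN // => H; apply: (@addrI _ (N x + N y)%R).
  by rewrite -H [(N y + N x)%R]addrC.
have Nent : forall y a b, (b < a)%N -> (a < n'.+1)%N ->
    N y (inord a) (inord b) = l a b y.
  by move=> y a b ba an; rewrite mxE !inordK // ?ba // (ltn_trans ba).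
have Hrel : forall i x y, (i.+2 < n'.+1)%N -> x \in G -> y \in G ->
    (l i.+2 i.+1 x * l i.+1 i y = l i.+2 i.+1 y * l i.+1 i x)%R.
  move=> i x y hi xG yG.
  have := congr1 (fun A : 'M_n'.+1 => A (inord i.+2) (inord i)) (Ncomm x y xG yG).
  rewrite /= !(@sl_mul2 _ _ _ _ (inord i.+2) (inord i) (inord i.+1)) ?inordK //;
    try by rewrite ltnW // ltnW.
  by rewrite !Nent // ltnW.
have [x0 x0G f0] := Hsub 0 n2.
pose f := l 1%N 0%N.
have Hprop : forall i, (i.+1 < n'.+1)%N -> l i.+1 i x0 != 0%R /\ forall y, y \in G -> l i.+1 i y = (l i.+1 i x0 / f x0 * f y)%R.
  elim=> [|i IH] hi.
    by split=> // y _; rewrite mulfV // mul1r.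
  have [bx0 Hb] := IH (ltnW hi).
  have [y1 y1G ay1] := Hsub i.+1 hi.
  have Ha : forall y, y \in G ->
      (l i.+2 i.+1 y * l i.+1 i x0 = l i.+2 i.+1 x0 * l i.+1 i y)%R.
    by move=> y yG; apply: Hrel.
  split.
    apply/negP => /eqP a0; have := Ha y1 y1G; rewrite a0 mul0r => /eqP.
    by rewrite mulf_eq0 (negPf ay1) (negPf bx0).
  move=> y yG; apply: (mulIf bx0); rewrite Ha // Hb //.
  rewrite -!mulrA; congr (_ * _)%R.
  by rewrite [LHS]mulrC -mulrA.
have Hpow : forall x k, x \in G -> (1%:M + N (x ^+ k)%g = (1%:M + N x) ^+ k)%R.
  move=> x k xG; elim: k => [|k IH]; first by rewrite expg0 ND ?group1 // addr0 expr0.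
  by rewrite expgSr MM ?groupX // IH exprS.
have Hn : (n'.+1 <= p)%N.
  rewrite leqNgt; apply/negP => lt.
  have xpD : x0 ^+ p \in G^`(1).
    rewrite DPhi (Phi_joing pG); apply: (subsetP (joing_subr _ _)).
    by have := Mho_p_elt 1 x0G (mem_p_elt pG x0G); rewrite expn1.
  have := Hpow x0 p x0G; rewrite ND // addr0.
  set A := N x0.
  rewrite -(pFrobenius_autE (pchar_mx n' pp)) pFrobenius_autD_comm; last first.
    by rewrite /GRing.comm mul1r mulr1.
  rewrite !pFrobenius_autE expr1n => H.
  have Ap : (A ^+ p = 0)%R by apply: (@addrI _ 1%R); rewrite -H addr0.
  have Hd : forall a b : 'I_n'.+1, b.+1 = a :> nat -> A a b != 0%R.
    move=> a b ab; rewrite mxE -ab ltnSn.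
    have hb : (b.+1 < n'.+1)%N by rewrite ab ltn_ord.
    by have [] := Hprop b hb.
  have [_ H2] := @sl_pow _ _ A (slN x0) Hd p.
  by have := H2 (inord p) (inordK lt); rewrite Ap mxE eqxx.
split=> //.
have fx0 : f x0 != 0%R by [].
split.
  move=> i hi; exists (l i.+1 i x0 / f x0)%R; split.
    by rewrite mulf_neq0 // ?invr_neq0 //; have [] := Hprop i hi.
  by have [] := Hprop i hi.
pose lam t := (l t.+1 t x0 / f x0)%R.
pose c k := (\prod_(t < k) lam t)%R.
have cS : forall k, c k.+1 = (c k * lam k)%R by move=> k; rewrite /c big_ord_recr.
have cnz : forall k, (k < n'.+1)%N -> c k != 0%R.
  elim=> [|k IH] kn; first by rewrite /c big_ord0 oner_neq0.
  rewrite cS mulf_neq0 ?IH ?(ltnW kn) //.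
  by rewrite /lam mulf_neq0 // ?invr_neq0 //; have [] := Hprop k kn.
pose h i := g i ^+ c i.
pose m i j y := (c j * l i j y / c i)%R.
have hPr : forall a, Pr n'.+1 h a = Pr n'.+1 g (fun i => c i * a i)%R.
  move=> a; apply: eq_bigr => i _.
  by rewrite /h -expFpM ?Dp ?Hg.
have hD : forall i, (i < n'.+1)%N -> h i \in G^`(1) by move=> i hi; rewrite groupX ?Hg.
exists h, m, f; split.
- split=> //.
    move=> x xD; have [a ->] := Hex x xD; exists (fun i => a i / c i)%R.
    change (Pr n'.+1 g a = Pr n'.+1 h (fun i => a i / c i)%R).
    rewrite hPr; apply: PrE => i hi.
    by rewrite mulrCA mulfV ?cnz // mulr1.
  move=> a b E i hi; change (Pr n'.+1 h a = Pr n'.+1 h b) in E.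
  rewrite !hPr in E; have := Huniq _ _ E i hi.
  exact: (mulfI (cnz i hi)).
- move=> y j yG jn.
  rewrite (@Prtri gT p n'.+1 h (fun i => m i j y) j pp jn) hPr /h conjXg Hconj //.
  rewrite (@PrX gT p n'.+1 _ g _ _ pp abD Dp Hg); apply: PrE => i hi.
  rewrite /v /vt; case: ifP => [/eqP->|ne]; first by rewrite mul1r mulr1.
  case: ifP => ji; last by rewrite mul0r mulr0.
  by rewrite /m mulrCA mulfV ?cnz // mulr1 mulrC.
- move=> i y hi yG; rewrite /m cS (Hprop i hi).2 // mulrA -/(lam i).
  by rewrite mulrAC mulfV ?mul1r // -cS cnz.
- split.
    move=> x y xG yG.
    have := entry10 n2 (slN y) (slN x) (NMN x y xG yG).
    by rewrite !mxE !inordK //= /f => ->; rewrite addrC.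
  move=> d dD.
  have := congr1 (fun A : 'M_n'.+1 => A (inord 1) (inord 0)) (ND d dD).
  by rewrite /= !mxE !inordK.
- by exists x0.
Qed.
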